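(* For every unweighted congestion game $\mathcal{G}$ with cubic latency functions, $\mathrm{Apx}^1_\emptyset(\mathcal{G})\le\frac{17929}{34}\approx 527.323$.
   Context: A weighted congestion game consists of a finite set $[n]=\{1,\dots,n\}$ of players, a finite set $E$ of resources, for each player $i$ a weight $w_i>0$ and a nonempty finite strategy set $\Sigma_i\subseteq 2^E$, and for each resource $e$ a latency function $\ell_e:\mathbb{R}_{\ge 0}\to\mathbb{R}_{\ge 0}$. It is unweighted if $w_i=1$ for all $i$. Cubic latency functions means $\ell_e(x)=\sum_{j=0}^{3}\alpha_{e,j}x^j$ with all $\alpha_{e,j}\ge 0$. For a (possibly partial) profile in which each player in some subset $P\subseteq[n]$ has chosen a strategy $s_i$, the congestion of $e$ is $L_e=\sum_{i\in P:\,e\in s_i}w_i$ and the cost of a player $i\in P$ is $\sum_{e\in s_i}\ell_e(L_e)$. For a full profile $S$, $\mathrm{SUM}(S)=\sum_{i\in[n]}c_i(S)$ and $S^*$ minimizes $\mathrm{SUM}$. A one-round walk from the empty strategy profile: starting with no player having chosen a strategy, the players arrive one at a time in some order, and each arriving player selects a best response, i.e., a strategy in her strategy set minimizing her cost given the strategies already chosen by the previously arrived players (later players not yet present); the outcome is the full profile after all $n$ players have chosen. $\mathrm{Apx}^1_\emptyset(\mathcal{G})$ is the maximum, over all orderings of the players and all choices among best responses, of $\mathrm{SUM}(\text{outcome})/\mathrm{SUM}(S^* )$. *)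

(* Defs.v *)
From HB Require Import structures.
From mathcomp Require Import all_boot all_order all_algebra all_fingroup.
Set Implicit Arguments. Unset Strict Implicit. Unset Printing Implicit Defensive.
Import Order.TTheory GRing.Theory Num.Theory.
Local Open Scope ring_scope.

(* Players are 'I_n, resources are a finType E.  A (possibly partial)
   profile is given by a set P of present players and S : 'I_n -> {set E}
   (S j is only relevant for j \in P). *)

Definition cubic_latency (R : realFieldType) (E : finType)
  (alpha : E -> 'I_4 -> R) (e : E) (x : R) : R :=
  \sum_(j < 4) alpha e j * x ^+ j.

Definition congestion (E : finType) (n : nat) (P : {set 'I_n})
  (S : 'I_n -> {set E}) (e : E) : nat :=
  #|[set j in P | e \in S j]|.

Definition deviate (E : finType) (n : nat) (S : 'I_n -> {set E})
  (i : 'I_n) (s : {set E}) : 'I_n -> {set E} :=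
  fun j => if j == i then s else S j.

(* Cost of player i (assumed in P) when playing s, the others in P playing S. *)
Definition cost_with (R : realFieldType) (E : finType) (n : nat)
  (alpha : E -> 'I_4 -> R) (P : {set 'I_n}) (S : 'I_n -> {set E})
  (i : 'I_n) (s : {set E}) : R :=
  \sum_(e in s) cubic_latency alpha e (congestion P (deviate S i s) e)%:R.

Definition cost (R : realFieldType) (E : finType) (n : nat)
  (alpha : E -> 'I_4 -> R) (S : 'I_n -> {set E}) (i : 'I_n) : R :=
  cost_with alpha [set: 'I_n] S i (S i).

Definition SUM (R : realFieldType) (E : finType) (n : nat)
  (alpha : E -> 'I_4 -> R) (S : 'I_n -> {set E}) : R :=
  \sum_(i < n) cost alpha S i.

Definition feasible (E : finType) (n : nat) (Sigma : 'I_n -> {set {set E}})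
  (S : 'I_n -> {set E}) : Prop :=
  forall i, S i \in Sigma i.

Definition arrived (n : nat) (sigma : {perm 'I_n}) (k : 'I_n) : {set 'I_n} :=
  [set sigma j | j : 'I_n & (j <= k)%N].

(* S is the outcome of a one-round walk from the empty profile in which the
   players arrive in the order sigma 0, sigma 1, ..., sigma (n-1), each
   choosing a best response given the previously arrived players. *)
Definition one_round_walk_outcome (R : realFieldType) (E : finType) (n : nat)
  (Sigma : 'I_n -> {set {set E}}) (alpha : E -> 'I_4 -> R)
  (sigma : {perm 'I_n}) (S : 'I_n -> {set E}) : Prop :=
  forall k : 'I_n,
    S (sigma k) \in Sigma (sigma k) /\
    forall s, s \in Sigma (sigma k) ->
      cost_with alpha (arrived sigma k) S (sigma k) (S (sigma k))
        <= cost_with alpha (arrived sigma k) S (sigma k) s.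

(* Main.v *)
Require Import Defs.
From HB Require Import structures.
From mathcomp Require Import all_boot all_order all_algebra all_fingroup.
From mathcomp Require Import ring lra.
Import Order.TTheory GRing.Theory Num.Theory.
Local Open Scope ring_scope.
Lemma amgm {R : realFieldType} (a b : R) : 0 <= a -> 0 <= b ->
  4 * a * b^+3 <= a^+4 + 3 * b^+4.
Proof. move=> ha hb.
have h1 : 0 <= (a-b)^+2 by rewrite sqr_ge0.
have h2 : 0 <= a^+2 + 2*a*b + 3*b^+2 by nra.
have := mulr_ge0 h1 h2. nra. Qed.
Lemma h3 {R : realFieldType} (x : R) : 0 <= x ->
  34*x^+4+164/3*(x+1)^+4-369/4*x^+2*(x+1)^+2 <= 16 * 5000.
Proof. move=> hx.
have := sqr_ge0 (x^+2 - 5*x - 45).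
have := sqr_ge0 (x - 10).
have := sqr_ge0 (x^+2 - 10*x).
nra. Qed.
Lemma m3big {R : realFieldType} (x o g : R) : 0 <= x -> 2 <= o -> 4 * g = x^+2 * (x+1)^+2 ->
  34 * x^+4 + 369 * o * (x+1)^+3 - 369 * g <= 17929 * o^+4.
Proof. move=> hx ho hg.
have := @amgm _ (27/8 * o) (2/3 * (x+1)) ltac:(lra) ltac:(lra).
have := h3 x hx.
have ho2 : 4 <= o^+2 by nra.
have ho4 : 16 <= o^+4 by rewrite (_ : o^+4 = o^+2 * o^+2); [nra | rewrite -exprD].
nra. Qed.
Lemma m3one {R : realFieldType} (x g : R) : 0 <= x -> (x <= 4 \/ 5 <= x) -> 4 * g = x^+2 * (x+1)^+2 ->
  34 * x^+4 + 369 * (x+1)^+3 - 369 * g <= 17929.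
Proof. move=> hx hx45 hg.
have h1 : 0 <= (x - 4) * (x - 5) by case: hx45 => h; nra.
have h2 : 0 <= 233 * x^+2 + 1359 * x + 3512 by nra.
have := mulr_ge0 h1 h2. nra. Qed.
Lemma m2 {R : realFieldType} (x o g : R) : 0 <= x -> (o = 0 \/ 1 <= o) -> 6 * g = x * (x+1) * (2*x+1) ->
  34 * x^+3 + 369 * o * (x+1)^+2 - 369 * g <= 17929 * o^+3.
Proof. move=> hx [->|ho] hg; first by nra.
have ho3 : 1 <= o^+3 by have := exprn_ege1 3 ho; lra.
have hab : forall a b : R, 0 <= a -> 0 <= b -> 3 * a * b^+2 <= a^+3 + 2 * b^+3.
  move=> a b ha hb. have := mulr_ge0 (sqr_ge0 (a - b)) (addr_ge0 ha (mulr_ge0 (ler0n R 2) hb)). nra.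
have := hab (4 * o) ((x+1)/2) ltac:(lra) ltac:(lra).
nra. Qed.
Lemma m1 {R : realFieldType} (x o g : R) : 0 <= x -> (o = 0 \/ 1 <= o) -> 2 * g = x * (x+1) ->
  34 * x^+2 + 369 * o * (x+1) - 369 * g <= 17929 * o^+2.
Proof. move=> hx [->|ho] hg; first by nra.
have := sqr_ge0 (2 * o - (x+1)/2).
nra. Qed.
Lemma m0 {R : realFieldType} (x o g : R) : 0 <= x -> (o = 0 \/ 1 <= o) -> g = x ->
  34 * x + 369 * o - 369 * g <= 17929 * o.
Proof. move=> hx [->|ho] hg; lra. Qed.
Lemma s1 {R : realFieldType} X : 2 * \sum_(t < X) (t.+1%:R : R)^+1 = X%:R * (X%:R + 1).
Proof. elim: X => [|X IH]; first by rewrite big_ord0 mulr0 mul0r.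
rewrite big_ord_recr /= mulrDr IH -natr1. ring. Qed.
Lemma s2 {R : realFieldType} X : 6 * \sum_(t < X) (t.+1%:R : R)^+2 = X%:R * (X%:R + 1) * (2 * X%:R + 1).
Proof. elim: X => [|X IH]; first by rewrite big_ord0 mulr0 !mul0r.
rewrite big_ord_recr /= mulrDr IH -natr1. ring. Qed.
Lemma s3 {R : realFieldType} X : 4 * \sum_(t < X) (t.+1%:R : R)^+3 = X%:R^+2 * (X%:R + 1)^+2.
Proof. elim: X => [|X IH]; first by rewrite big_ord0 mulr0 expr0n mul0r.
rewrite big_ord_recr /= mulrDr IH -natr1. ring. Qed.
Lemma s0 {R : realFieldType} X : \sum_(t < X) (t.+1%:R : R)^+0 = X%:R.
Proof. under eq_bigr do rewrite expr0. by rewrite sumr_const card_ord. Qed.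

Lemma mono {R : realFieldType} (j : 'I_4) (X O : nat) :
  34 * (X%:R * X%:R^+j) + 369 * (O%:R * X.+1%:R^+j) - 369 * (\sum_(t<X) (t.+1%:R : R)^+j)
   <= 17929 * (O%:R * O%:R^+j).
Proof.
have hX : 0 <= (X%:R : R) by rewrite ler0n.
have hO : (O%:R : R) = 0 \/ 1 <= (O%:R : R).
  case: O => [|O]; [by left | right; by rewrite ler1n].
rewrite -natr1.
case: j => [[|[|[|[|j]]]] hj] //=.
- have := @m0 _ _ _ _ hX hO (s0 (R:=R) X). rewrite !expr0 !mulr1. lra.
- have := @m1 _ _ _ _ hX hO (s1 (R:=R) X). rewrite !expr1. move=> h. nra.
- have := @m2 _ _ _ _ hX hO (s2 (R:=R) X). rewrite !exprS !expr0. move=> h. nra.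
- have h3 := s3 (R:=R) X. rewrite !exprS !expr0 !mulr1.
  case: O hO => [|[|O]] hO.
  + rewrite ?mul0r ?mulr0. nra.
  + have hx45 : (X%:R : R) <= 4 \/ 5 <= (X%:R : R).
      case: (leqP X 4) => h; [left | right].
      * by rewrite (ler_nat R X 4).
      * by rewrite (ler_nat R 5 X).
    have := @m3one _ _ _ hX hx45 h3. rewrite !mul1r. lra.
  + have ho : 2 <= (O.+2%:R : R) by rewrite (ler_nat R 2 O.+2).
    have := @m3big _ _ _ _ hX ho h3. rewrite !exprS !expr0 !mulr1. lra.
Qed.
Lemma key {R : realFieldType} (E : finType) (alpha : E -> 'I_4 -> R) (e : E)
  (ha : forall j, 0 <= alpha e j) (X O : nat) :
  34 * (X%:R * cubic_latency alpha e X%:R) + 369 * (O%:R * cubic_latency alpha e X.+1%:R)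
  - 369 * (\sum_(t < X) cubic_latency alpha e t.+1%:R)
  <= 17929 * (O%:R * cubic_latency alpha e O%:R).
Proof.
rewrite /cubic_latency.
have E3 : \sum_(t<X) \sum_(j<4) alpha e j * (t.+1%:R : R) ^+ j
   = \sum_(j<4) alpha e j * \sum_(t<X) t.+1%:R^+j.
  by rewrite exchange_big; apply eq_bigr => j _; rewrite mulr_sumr.
rewrite E3 !mulr_sumr -big_split -sumrB /=.
apply: ler_sum => j _.
have := ler_wpM2l (ha j) (mono j X O).
lra.
Qed.
Lemma congD (E : finType) (n : nat) (P : {set 'I_n}) (S : 'I_n -> {set E}) i e :
  congestion P (deviate S i (S i)) e = congestion P S e.
Proof.
rewrite /congestion /deviate; apply: eq_card => j; rewrite !inE.
by case: (j =P i) => [->|].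
Qed.

Lemma sum_swap {R : realFieldType} (E : finType) (n : nat) (T : 'I_n -> {set E}) (f : E -> R) :
  \sum_(i < n) \sum_(e in T i) f e = \sum_e (congestion [set: 'I_n] T e)%:R * f e.
Proof.
under eq_bigr do rewrite big_mkcond.
rewrite exchange_big; apply: eq_bigr => e _ /=.
rewrite -big_mkcond /= sumr_const mulr_natl; congr (_ *+ _).
by apply: eq_card => j; rewrite !inE.
Qed.

Lemma SUME {R : realFieldType} (E : finType) (n : nat) (alpha : E -> 'I_4 -> R) (S : 'I_n -> {set E}) :
  SUM alpha S = \sum_e (congestion [set: 'I_n] S e)%:R * cubic_latency alpha e (congestion [set: 'I_n] S e)%:R.
Proof.
rewrite /SUM -sum_swap; apply: eq_bigr => i _.
by rewrite /cost /cost_with; apply: eq_bigr => e _; rewrite congD.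
Qed.

Lemma cong_dev_le (E : finType) (n : nat) (P : {set 'I_n}) (S : 'I_n -> {set E}) i s e :
  (congestion P (deviate S i s) e <= (congestion [set: 'I_n] S e).+1)%N.
Proof.
rewrite /congestion.
apply: leq_trans (_ : #|i |: [set j in [set: 'I_n] | e \in S j]| <= _)%N.
  apply: subset_leq_card; apply/subsetP => j; rewrite !inE /deviate.
  by case: eqP => //= _ /andP[_ ->].
by rewrite cardsU1; case: (i \in _).
Qed.

Lemma Lmono {R : realFieldType} (E : finType) (alpha : E -> 'I_4 -> R) e
  (ha : forall j, 0 <= alpha e j) (m k : nat) :
  (m <= k)%N -> cubic_latency alpha e m%:R <= cubic_latency alpha e k%:R.
Proof.
move=> hmk; apply: ler_sum => j _; apply: ler_wpM2l => //.
by apply: lerXn2r; rewrite ?nnegrE ?ler0n // ler_nat.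
Qed.

Lemma dev_le {R : realFieldType} (E : finType) (n : nat) (alpha : E -> 'I_4 -> R)
  (ha : forall e j, 0 <= alpha e j) (P : {set 'I_n}) (S : 'I_n -> {set E}) i s :
  cost_with alpha P S i s <= \sum_(e in s) cubic_latency alpha e (congestion [set: 'I_n] S e).+1%:R.
Proof.
apply: ler_sum => e _; apply: Lmono => //; exact: cong_dev_le.
Qed.

Definition Pm {n : nat} (sigma : {perm 'I_n}) (m : nat) : {set 'I_n} :=
  [set sigma j | j : 'I_n & (j < m)%N].

Definition Gf {R : realFieldType} {E : finType} (alpha : E -> 'I_4 -> R) e (c : nat) : R :=
  \sum_(t < c) cubic_latency alpha e t.+1%:R.

Lemma cong_add1 (E : finType) (n : nat) (P : {set 'I_n}) (S : 'I_n -> {set E}) i e :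
  i \notin P -> congestion (i |: P) S e = (congestion P S e + (e \in S i))%N.
Proof.
move=> hi; rewrite /congestion.
case: (boolP (e \in S i)) => hei.
  rewrite (_ : [set j in i |: P | e \in S j] = i |: [set j in P | e \in S j]).
    by rewrite cardsU1 inE (negbTE hi) /= addnC.
  apply/setP => j; rewrite !inE; case: (j =P i) => [->|] //=; by rewrite hei.
rewrite addn0; apply: eq_card => j; rewrite !inE.
by case: (j =P i) => [->|] //=; rewrite (negbTE hei) andbF.
Qed.

Lemma pot {R : realFieldType} (E : finType) (n : nat) (alpha : E -> 'I_4 -> R)
  (sigma : {perm 'I_n}) (S : 'I_n -> {set E}) (m : nat) : (m <= n)%N ->
  \sum_e Gf alpha e (congestion (Pm sigma m) S e)
  = \sum_(j : 'I_n | (j < m)%N) cost_with alpha (Pm sigma j.+1) S (sigma j) (S (sigma j)).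
Proof.
elim: m => [|m IH] hm.
  rewrite [RHS]big1; last by move=> j; rewrite ltn0.
  apply: big1 => e _.
  rewrite /congestion (_ : [set j in Pm sigma 0 | e \in S j] = set0) ?cards0 /Gf ?big_ord0 //.
  apply/setP => y; rewrite !inE; apply/negbTE; apply/andP => -[/imsetP[j]].
  by rewrite inE ltn0.
have hm' : (m < n)%N := hm.
pose j0 := Ordinal hm'.
have hP : Pm sigma m.+1 = sigma j0 |: Pm sigma m.
  apply/setP => y; rewrite in_setU1; apply/imsetP/orP.
    move=> [j]; rewrite inE ltnS leq_eqVlt => /orP[/eqP hj|hj] ->.
      by left; apply/eqP; congr (sigma _); apply: val_inj.
    by right; apply/imsetP; exists j; rewrite ?inE.
  case=> [/eqP ->|/imsetP[j hj ->]]; first by exists j0; rewrite // inE /=.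
  by exists j => //; move: hj; rewrite !inE => /ltnW; rewrite ltnS.
have hnot : sigma j0 \notin Pm sigma m.
  apply/imsetP => -[j]; rewrite inE => hj /perm_inj hjj.
  by move: hj; rewrite -hjj /= ltnn.
rewrite (bigD1 j0) /=; last by rewrite ltnSn.
rewrite (eq_bigl (fun j : 'I_n => (j < m)%N)); last first.
  move=> j /=; rewrite ltnS.
  have -> : (j != j0) = (val j != m) by [].
  by rewrite ltn_neqAle andbC.
rewrite -IH ?(ltnW hm) // addrC.
rewrite hP.
have -> : \sum_e Gf alpha e (congestion (sigma j0 |: Pm sigma m) S e)
   = \sum_e Gf alpha e (congestion (Pm sigma m) S e)
     + \sum_e (if e \in S (sigma j0) then cubic_latency alpha e (congestion (Pm sigma m) S e).+1%:R else 0).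
  rewrite -big_split /=; apply: eq_bigr => e _.
  rewrite cong_add1 //; case: (e \in S (sigma j0)); last by rewrite addn0 addr0.
  by rewrite addn1 /Gf big_ord_recr.
congr (_ + _).
rewrite /cost_with [in RHS]big_mkcond /=; apply: eq_bigr => e _.
case: ifP => // he.
by rewrite congD cong_add1 // he addn1.
Qed.
Theorem mainTheorem12 (R : realFieldType) (E : finType) (n : nat)
  (Sigma : 'I_n -> {set {set E}}) (alpha : E -> 'I_4 -> R)
  (hSigma : forall i, Sigma i != set0)
  (halpha : forall e j, 0 <= alpha e j)
  (sigma : {perm 'I_n}) (S : 'I_n -> {set E})
  (hwalk : one_round_walk_outcome Sigma alpha sigma S)
  (Sopt : 'I_n -> {set E})
  (hSopt : feasible Sigma Sopt)
  (hmin : forall S', feasible Sigma S' -> SUM alpha Sopt <= SUM alpha S') :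
  SUM alpha S <= (17929%:R / 34%:R) * SUM alpha Sopt.
Proof.
pose x e := congestion [set: 'I_n] S e.
pose o e := congestion [set: 'I_n] Sopt e.
pose A := \sum_e (x e)%:R * cubic_latency alpha e (x e)%:R.
pose B := \sum_e Gf alpha e (x e).
pose C := \sum_e (o e)%:R * cubic_latency alpha e (x e).+1%:R.
pose D := \sum_e (o e)%:R * cubic_latency alpha e (o e)%:R.
have hA : SUM alpha S = A by rewrite SUME.
have hD : SUM alpha Sopt = D by rewrite SUME.
have hPn : Pm sigma n = [set: 'I_n].
  apply/setP => y; rewrite inE; apply/imsetP; exists ((sigma^-1)%g y).
    by rewrite inE ltn_ord.
  by rewrite permKV.
have hBC : B <= C.
  have := @pot _ _ _ alpha sigma S n (leqnn n); rewrite hPn => hB.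
  rewrite /B hB.
  rewrite (eq_bigl (fun j : 'I_n => true)); last by move=> j; rewrite ltn_ord.
  apply: (@le_trans _ _ (\sum_(j < n) \sum_(e in Sopt (sigma j))
            cubic_latency alpha e (x e).+1%:R)).
    apply: ler_sum => j _.
    apply: le_trans (@dev_le _ _ _ alpha halpha (arrived sigma j) S (sigma j) (Sopt (sigma j))).
    exact: (hwalk j).2 _ (hSopt _).
  rewrite -(@reindex_inj _ _ _ _ sigma xpredT
     (fun i => \sum_(e in Sopt i) cubic_latency alpha e (x e).+1%:R) (@perm_inj _ sigma)) /=.
  by rewrite sum_swap.
have hkey : \sum_e (34 * ((x e)%:R * cubic_latency alpha e (x e)%:R)
     + 369 * ((o e)%:R * cubic_latency alpha e (x e).+1%:R) - 369 * Gf alpha e (x e))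
   <= \sum_e 17929 * ((o e)%:R * cubic_latency alpha e (o e)%:R).
  apply: ler_sum => e _; exact: key.
rewrite sumrB big_split /= -!mulr_sumr in hkey.
rewrite hA hD.
rewrite -/A -/B -/C -/D in hkey.
have : 34 * A <= 17929 * D.
  have : 0 <= 369 * (C - B) by lra.
  lra.
move=> h.
rewrite mulrAC ler_pdivlMr ?ltr0n //.
lra.
Qed.
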